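(* Let $I$ be a group, $f:I\to G$ a group epimorphism with kernel $K$, and $\varphi:I\to\mathbb R^m$ a surjective quasimorphism such that (i) $\varphi(uv)=\varphi(u)+\varphi(v)$ for all $u\in K$, $v\in I$, and (ii) $A:=\varphi(K)\subset\mathbb Z^m$. Suppose $C_\varphi+D_\varphi>0$. Then (1) $cl(w)\ge\dfrac{\theta_w+D_\varphi}{C_\varphi+D_\varphi}$ for every $w\in G$, $w\ne e$; (2) if $G\ne\{e\}$, then $cld\,G\ge\dfrac{\theta_\varphi+D_\varphi}{C_\varphi+D_\varphi}$.
   Context: $\mathbb R^m$ carries the norm $\|x\|=\max_i|x_i|$. A map $\varphi:I\to\mathbb R^m$ is a quasimorphism if its defect $D_\varphi:=\sup_{a,b\in I}\|\varphi(ab)-\varphi(a)-\varphi(b)\|$ is finite. $C_\varphi:=\sup\{\|\varphi([a,b])\|: a,b\in I\}$. Under (i), $A$ is a subgroup of $\mathbb Z^m$ and there is a well-defined surjective map $\widehat\varphi:G\to\mathbb R^m/A$, $\widehat\varphi(w)=\varphi(v)+A$ for any $v\in f^{-1}(w)$. For $w\in G$, $\theta_w:=\min\{\|y\|: y\in\widehat\varphi(w)\}$ (a minimum over an affine lattice), and $\theta_\varphi:=\sup_{w\in G}\theta_w$. $cl$ is the commutator length in $G$ ($\infty$ outside $[G,G]$) and $cld\,G=\sup cl(G)$. *)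

(* Defs.v *)
From HB Require Import structures.
From mathcomp Require Import all_boot all_order all_algebra.
From mathcomp Require Import all_classical all_reals ereal.
Set Implicit Arguments. Unset Strict Implicit. Unset Printing Implicit Defensive.
Import Order.TTheory GRing.Theory Num.Theory.
Local Open Scope classical_set_scope.
Local Open Scope ring_scope.

Section Defs.
Variables (R : realType) (m : nat).

Definition vnorm (x : 'rV[R]_m) : R := \big[Num.max/0]_(i < m) `|x ord0 i|.

Definition int_vec (y : 'rV[R]_m) : Prop := forall i, exists z : int, y ord0 i = z%:~R.

Variables (I G : groupType).

Definition group_epi (f : I -> G) : Prop :=
  (forall x y, f (x * y)%g = (f x * f y)%g) /\ (forall w, exists x, f x = w).

Definition defect_set (phi : I -> 'rV[R]_m) : set R :=
  [set r | exists a b, r = vnorm (phi (a * b)%g - phi a - phi b)].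

Definition is_quasimorphism (phi : I -> 'rV[R]_m) : Prop := has_ubound (defect_set phi).

Definition Dphi (phi : I -> 'rV[R]_m) : R := sup (defect_set phi).

Definition Cphi (phi : I -> 'rV[R]_m) : R :=
  sup [set r | exists a b, r = vnorm (phi [~ a, b]%g)].

Definition Aset (f : I -> G) (phi : I -> 'rV[R]_m) : set 'rV[R]_m :=
  [set phi u | u in [set u | f u = 1%g]].

Definition hatphi (f : I -> G) (phi : I -> 'rV[R]_m) (w : G) : set 'rV[R]_m :=
  [set y | exists v, f v = w /\ exists a, Aset f phi a /\ y = phi v + a].

Definition theta (f : I -> G) (phi : I -> 'rV[R]_m) (w : G) : R :=
  inf [set vnorm y | y in hatphi f phi w].

Definition theta_sup (f : I -> G) (phi : I -> 'rV[R]_m) : \bar R :=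
  ereal_sup [set (theta f phi w)%:E | w in [set: G]].

End Defs.

Section CL.
Variables (R : realType) (G : groupType).

Definition comm_prod (w : G) (n : nat) : Prop :=
  exists s : seq (G * G), size s = n /\
    w = foldr (fun p acc => ([~ p.1, p.2] * acc)%g) 1%g s.

(* commutator length, +oo outside [G,G] *)
Definition cl (w : G) : \bar R :=
  ereal_inf [set (n%:R)%:E | n in [set n | comm_prod w n]].

Definition cld : \bar R := ereal_sup [set cl w | w in [set: G]].

End CL.

(* Main.v *)
Require Import Defs.
From HB Require Import structures.
From mathcomp Require Import all_boot all_order all_algebra.
From mathcomp Require Import all_classical all_reals ereal.
From mathcomp Require Import lra.
Import Order.TTheory GRing.Theory Num.Theory.
Local Open Scope classical_set_scope.
Local Open Scope ring_scope.

Lemma vnorm_ge0 {R : realType} {m} (x : 'rV[R]_m) : 0 <= vnorm x.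
Proof. by rewrite /vnorm; elim/big_rec: _ => // i y _ Hy; rewrite le_max Hy orbT. Qed.

Lemma vnorm_le {R : realType} {m} (x : 'rV[R]_m) c :
  0 <= c -> (forall i, `|x ord0 i| <= c) -> vnorm x <= c.
Proof. by move=> c0 H; apply: bigmax_le. Qed.

Lemma vnorm_coord {R : realType} {m} (x : 'rV[R]_m) i : `|x ord0 i| <= vnorm x.
Proof. exact: le_bigmax. Qed.

Lemma vnorm_coord2 {R : realType} {m} (x : 'rV[R]_m) i :
  - vnorm x <= x ord0 i <= vnorm x.
Proof. by rewrite -ler_norml vnorm_coord. Qed.

Lemma vnorm0 {R : realType} {m} : vnorm (0 : 'rV[R]_m) = 0.
Proof.
apply: le_anti; rewrite vnorm_ge0 andbT; apply: vnorm_le => // i.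
by rewrite mxE normr0.
Qed.

Lemma grp_hom1 {I G : groupType} {f : I -> G} :
  (forall x y, f (x * y)%g = (f x * f y)%g) -> f 1%g = 1%g.
Proof.
move=> fM; have := mulKg (f 1%g) (f 1%g).
by rewrite -fM mulg1 mulVg => <-.
Qed.

Lemma grp_homV {I G : groupType} {f : I -> G} :
  (forall x y, f (x * y)%g = (f x * f y)%g) -> forall x, f x^-1%g = (f x)^-1%g.
Proof.
move=> fM x; symmetry; apply: mulg1_eq.
by rewrite -fM mulgV (grp_hom1 fM).
Qed.

Lemma grp_homR {I G : groupType} {f : I -> G} :
  (forall x y, f (x * y)%g = (f x * f y)%g) ->
  forall a b, f [~ a, b]%g = [~ f a, f b]%g.
Proof.
by move=> fM a b; rewrite /commg /conjg !fM !(grp_homV fM).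
Qed.

Theorem proposition2 (R : realType) (m : nat) (I G : groupType)
    (f : I -> G) (phi : I -> 'rV[R]_m) :
  group_epi f ->
  (forall y, exists x, phi x = y) ->
  is_quasimorphism phi ->
  (forall u v, f u = 1%g -> phi (u * v)%g = phi u + phi v) ->
  (forall u, f u = 1%g -> int_vec (phi u)) ->
  0 < Cphi phi + Dphi phi ->
  (forall w : G, w <> 1%g ->
     ((theta f phi w + Dphi phi) / (Cphi phi + Dphi phi))%:E <= cl R w)%E /\
  ((exists w : G, w <> 1%g) ->
     ((theta_sup f phi + (Dphi phi)%:E) * ((Cphi phi + Dphi phi)^-1)%:E
        <= cld R G)%E).
Proof.
move=> [fM fsurj] _ HQ Hi _ CD0.
set D := Dphi phi; set C := Cphi phi.
have f1 := grp_hom1 fM.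
have phi1 : phi 1%g = 0.
  have := Hi 1%g 1%g f1; rewrite mulg1 => /eqP.
  by rewrite -subr_eq subrr eq_sym => /eqP.
have Hdef a b : vnorm (phi (a * b)%g - phi a - phi b) <= D.
  apply: sup_upper_bound; last by exists a, b.
  by split => //; exists (vnorm (phi (1 * 1)%g - phi 1%g - phi 1%g)); exists 1%g, 1%g.
have Hc a b i : - D <= phi (a * b)%g ord0 i - phi a ord0 i - phi b ord0 i <= D.
  by have := vnorm_coord2 (phi (a * b)%g - phi a - phi b) i;
     rewrite !mxE => /andP[h1 h2]; rewrite (le_trans _ h1) ?(le_trans h2) // lerN2.
have D0 : 0 <= D by apply: le_trans (Hdef 1%g 1%g); apply: vnorm_ge0.
have Hcomm a b : vnorm (phi [~ a, b]%g) <= C.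
  apply: sup_upper_bound; last by exists a, b.
  split; first by exists (vnorm (phi [~ 1, 1]%g)); exists 1%g, 1%g.
  exists (5 * D) => _ [x [y ->]].
  apply: vnorm_le; first lra.
  move=> i; rewrite ler_norml.
  have h1 := Hc x^-1%g (y^-1 * (x * y))%g i.
  have h2 := Hc y^-1%g (x * y)%g i.
  have h3 := Hc x y i.
  have h4 := Hc x x^-1%g i.
  have h5 := Hc y y^-1%g i.
  rewrite !mulgV phi1 mxE in h4 h5.
  rewrite /commg /conjg.
  apply/andP; split; lra.
have Hmul a b : vnorm (phi (a * b)%g) <= vnorm (phi a) + vnorm (phi b) + D.
  apply: vnorm_le; first by rewrite !addr_ge0 ?vnorm_ge0.
  move=> i; rewrite ler_norml.
  have := Hc a b i; have := vnorm_coord2 (phi a) i; have := vnorm_coord2 (phi b) i.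
  move=> /andP[? ?] /andP[? ?] /andP[? ?]; apply/andP; split; lra.
have Hind : forall s p, exists v, f v = foldr (fun p acc => ([~ p.1, p.2] * acc)%g) 1%g (p :: s)
    /\ vnorm (phi v) + D <= (size s).+1%:R * (C + D).
  elim => [|p' s IH] p.
    have [a fa] := fsurj p.1; have [b fb] := fsurj p.2.
    exists [~ a, b]%g; rewrite /= mulg1 (grp_homR fM) fa fb; split => //.
    by rewrite mul1r lerD2r.
  have [v' [fv' Hv']] := IH p'.
  have [a fa] := fsurj p.1; have [b fb] := fsurj p.2.
  exists ([~ a, b] * v')%g; split.
    by rewrite fM (grp_homR fM) fa fb fv'.
  have := Hmul [~ a, b]%g v'; have := Hcomm a b.
  rewrite [size _]/= mulrSr mulrDl mul1r; lra.
have theta_le w v : f v = w -> theta f phi w <= vnorm (phi v).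
  move=> fv; apply: ge_inf.
    by exists 0 => _ [y _ <-]; apply: vnorm_ge0.
  exists (phi v) => //; exists v; split => //; exists 0; split; last by rewrite addr0.
  by exists 1%g.
have theta_ge0 w : 0 <= theta f phi w.
  apply: lb_le_inf; last by move=> _ [y _ <-]; apply: vnorm_ge0.
  have [v fv] := fsurj w.
  exists (vnorm (phi v)); exists (phi v) => //; exists v; split => //.
  by exists 0; split; [exists 1%g | rewrite addr0].
have part1 : forall w : G, w <> 1%g ->
     (((theta f phi w + D) / (C + D))%:E <= cl R w)%E.
  move=> w w1; apply: le_ereal_inf_tmp => _ [n [s [Hs Hw]] <-].
  case: s Hs Hw => [|p s] Hs Hw; first by case: w1.
  have [v [fv Hv]] := Hind s p.
  rewrite lee_fin ler_pdivrMr // -Hs.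
  have := theta_le w v; rewrite fv -Hw => /(_ erefl) h; apply: le_trans Hv; lra.
split => // -[w0 w01].
set c := (C + D)^-1.
have c0 : 0 < c by rewrite invr_gt0.
have Hall w : (((theta f phi w + D) * c)%:E <= cld R G)%E.
  have Hcl w' : w' <> 1%g -> (((theta f phi w' + D) * c)%:E <= cld R G)%E.
    move=> w'1; apply: le_trans (part1 w' w'1) _.
    by apply: ereal_sup_ubound; exists w'.
  have [->|w1] := eqVneq w 1%g; last by apply: Hcl; apply/eqP.
  apply: le_trans (Hcl w0 w01); rewrite lee_fin ler_pM2r // lerD2r.
  apply: le_trans (theta_ge0 w0).
  by have := theta_le 1%g 1%g f1; rewrite phi1 vnorm0.
case Ecld : (cld R G) => [r| |]; last 2 first.
- by rewrite leey.
- by have := Hall w0; rewrite Ecld leeNy_eq.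
have Hts : (theta_sup f phi <= (r / c - D)%:E)%E.
  apply: ge_ereal_sup => _ [w _ <-]; rewrite lee_fin.
  have := Hall w; rewrite Ecld lee_fin -ler_pdivlMr //; lra.
case Ets : (theta_sup f phi) Hts => [t| |] Hts.
- rewrite -EFinD -EFinM lee_fin; rewrite lee_fin in Hts.
  by rewrite -ler_pdivlMr //; lra.
- by [].
- by rewrite /= mulNyr gtr0_sg // mul1e leNye.
Qed.
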